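(* For all agents $a$, messages $M,M'$ and formulas $\phi,\psi$, the following formulas are valid: (1) $\mathsf{k}_a(a)$; (2) $(\mathsf{k}_a(M)\wedge\mathsf{k}_a(M'))\leftrightarrow\mathsf{k}_a((M,M'))$; (3) $[M]\mathsf{k}_{\mathsf{CM}}(M)$; (4) $[M](\phi\to\psi)\to([M]\phi\to[M]\psi)$; (5) $[M]\phi\to(\mathsf{k}_{\mathsf{CM}}(M)\to\phi)$; (6) $[M]\phi\to\langle M\rangle\phi$; (7) $\phi\to[M]\phi$. Moreover (8) if $\phi$ is valid then $[M]\phi$ is valid, and (9) if $\mathsf{k}_{\mathsf{CM}}(M)\to\mathsf{k}_{\mathsf{CM}}(M')$ is valid then $[M']\phi\to[M]\phi$ is valid.
   Context: Syntax. Fix a finite set $\mathcal{A}$ of agent names containing a distinguished name $\mathsf{CM}$. Messages: $M ::= a \mid B \mid (M,M)$ ($a\in\mathcal{A}$, $B$ optional data constants, pairs). $\mathcal{P}$ is a denumerable set of propositional variables containing atoms $\mathsf{k}_a(M)$. Formulas: $\phi ::= P \mid \phi\wedge\phi \mid \phi\vee\phi \mid \neg\phi \mid \phi\to\phi \mid [M]\phi$. Abbreviations: $\phi\leftrightarrow\psi:=(\phi\to\psi)\wedge(\psi\to\phi)$, $\langle M\rangle\phi:=\neg\neg(\mathsf{k}_{\mathsf{CM}}(M)\wedge\phi)$. Semantics. An LIiP-model is $(\mathcal{S},\sqsubseteq,\{R_M\}_M,\{D_a\}_{a\in\mathcal{A}},\mathcal{V})$ with $\mathcal{S}$ a nonempty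 set of states, $\sqsubseteq$ a partial order, $D_a(s)$ a set of messages per agent and state, $\mathrm{cl}_a(s)$ the smallest set of messages containing $a$ and $D_a(s)$ closed under pairing and taking components of pairs. $\mathcal{V}:\mathcal{P}\to 2^{\mathcal{S}}$ satisfies $\mathcal{V}(\mathsf{k}_a(M))=\{s: M\in\mathrm{cl}_a(s)\}$ and is upward closed along $\sqsubseteq$. $M\preceq M'$ iff for all $s$, $M\in\mathrm{cl}_{\mathsf{CM}}(s)$ implies $M'\in\mathrm{cl}_{\mathsf{CM}}(s)$. The $R_M$ satisfy: (i) $sR_Ms'$ implies $M\in\mathrm{cl}_{\mathsf{CM}}(s')$; (ii) $M\in\mathrm{cl}_{\mathsf{CM}}(s)$ implies $sR_Ms$; (iii) every $s$ has some $s'$ with $sR_Ms'$; (iv) $R_M\subseteq R_{\mathsf{CM}}={\sqsubseteq}$; (v) $sR_{\mathsf{CM}}t$ and $tR_Mu$ imply $sR_Mu$; (vi) $M\preceq M'$ implies $R_M\subseteq R_{M'}$. Satisfaction: atoms via $\mathcal{V}$; $\wedge,\vee$ classically; $s\models\neg\phi$ iff no $s'\sqsupseteq s$ satisfies $\phi$; $s\models\phi\to\psi$ iff every $s'\sqsupseteq s$ satisfying $\phi$ satisfies $\psi$; $s\models[M]\phi$ iff every $s'$ with $sR_Ms'$ satisfies $\phi$. Valid: true at every state of every LIiP-model. *)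

(* Defs.v *)
From mathcomp Require Import all_boot.
Set Implicit Arguments. Unset Strict Implicit. Unset Printing Implicit Defensive.

Section LIiP.
Variables (Agent : finType) (CM : Agent) (Data : Type).

Inductive msg : Type :=
| MAgent : Agent -> msg
| MData : Data -> msg
| MPair : msg -> msg -> msg.

Inductive pvar : Type :=
| PK : Agent -> msg -> pvar
| PVar : nat -> pvar.

Inductive form : Type :=
| FAtom : pvar -> form
| FAnd : form -> form -> form
| FOr : form -> form -> form
| FNeg : form -> form
| FImp : form -> form -> form
| FBox : msg -> form -> form.

Definition Fk (a : Agent) (M : msg) : form := FAtom (PK a M).
Definition FIff (p q : form) : form := FAnd (FImp p q) (FImp q p).
Definition FDia (M : msg) (p : form) : form :=
  FNeg (FNeg (FAnd (Fk CM M) p)).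

Inductive cl (D : msg -> Prop) (a : Agent) : msg -> Prop :=
| cl_self : cl D a (MAgent a)
| cl_D : forall m, D m -> cl D a m
| cl_pair : forall m1 m2, cl D a m1 -> cl D a m2 -> cl D a (MPair m1 m2)
| cl_fst : forall m1 m2, cl D a (MPair m1 m2) -> cl D a m1
| cl_snd : forall m1 m2, cl D a (MPair m1 m2) -> cl D a m2.

Record model : Type := Model {
  St : Type;
  St_inhabited : inhabited St;
  le : St -> St -> Prop;
  le_refl : forall s, le s s;
  le_trans : forall s t u, le s t -> le t u -> le s u;
  le_antisym : forall s t, le s t -> le t s -> s = t;
  Rm : msg -> St -> St -> Prop;
  Dm : Agent -> St -> msg -> Prop;
  Val : pvar -> St -> Prop;
  Val_k : forall a M s, Val (PK a M) s <-> cl (Dm a s) a M;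
  Val_up : forall p s t, le s t -> Val p s -> Val p t;
  R_i : forall M s t, Rm M s t -> cl (Dm CM t) CM M;
  R_ii : forall M s, cl (Dm CM s) CM M -> Rm M s s;
  R_iii : forall M s, exists t, Rm M s t;
  R_CM : forall s t, Rm (MAgent CM) s t <-> le s t;
             R_iv : forall M s t, Rm M s t -> Rm (MAgent CM) s t;
  R_v : forall M s t u, Rm (MAgent CM) s t -> Rm M t u -> Rm M s u;
  R_vi : forall M M',
     (forall s, cl (Dm CM s) CM M -> cl (Dm CM s) CM M') ->
     forall s t, Rm M s t -> Rm M' s t
}.

Fixpoint sat (K : model) (s : St K) (f : form) {struct f} : Prop :=
  match f with
  | FAtom p => @Val K p s
  | FAnd p q => @sat K s p /\ @sat K s q
  | FOr p q => @sat K s p \/ @sat K s q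
  | FNeg p => forall t, @le K s t -> ~ @sat K t p
  | FImp p q => forall t, @le K s t -> @sat K t p -> @sat K t q
  | FBox M p => forall t, @Rm K M s t -> @sat K t p
  end.

Definition valid (f : form) : Prop := forall (K : model) (s : St K), @sat K s f.

End LIiP.

(* Main.v *)
Require Import Defs.
From mathcomp Require Import all_boot.


Lemma RCM_le (Agent : finType) (CM : Agent) (Data : Type) (K : model CM Data) s t :
  @le _ _ _ K s t -> Rm (MAgent Data CM) s t.
Proof. by move=> H; apply/R_CM. Qed.
Arguments RCM_le {Agent CM Data K s t}.

Lemma persist (Agent : finType) (CM : Agent) (Data : Type) (K : model CM Data) (f : form Agent Data) :
  forall s t, @le _ _ _ K s t -> sat s f -> sat t f.
Proof.
elim: f => [p|p IHp q IHq|p IHp q IHq|p IHp|p IHp q IHq|M p IHp] s t Hst /=.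
- by apply: Val_up.
- by case=> H1 H2; split; [apply: IHp Hst H1|apply: IHq Hst H2].
- by case=> H; [left; apply: IHp Hst H|right; apply: IHq Hst H].
- by move=> H u Htu; apply: H; apply: le_trans Hst Htu.
- by move=> H u Htu; apply: H; apply: le_trans Hst Htu.
- move=> H u Htu; apply: H; apply: (R_v (RCM_le Hst)); exact: Htu.
Qed.
Arguments persist {Agent CM Data K} f {s t}.

Theorem proposition4 (Agent : finType) (CM : Agent) (Data : Type) :
  (forall a : Agent, valid CM (Fk a (MAgent Data a))) /\
  (forall (a : Agent) (M M' : msg Agent Data),
      valid CM (FIff (FAnd (Fk a M) (Fk a M')) (Fk a (MPair M M')))) /\
  (forall M : msg Agent Data, valid CM (FBox M (Fk CM M))) /\
  (forall (M : msg Agent Data) (phi psi : form Agent Data),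
      valid CM (FImp (FBox M (FImp phi psi)) (FImp (FBox M phi) (FBox M psi)))) /\
  (forall (M : msg Agent Data) (phi : form Agent Data),
      valid CM (FImp (FBox M phi) (FImp (Fk CM M) phi))) /\
  (forall (M : msg Agent Data) (phi : form Agent Data),
      valid CM (FImp (FBox M phi) (FDia CM M phi))) /\
  (forall (M : msg Agent Data) (phi : form Agent Data),
      valid CM (FImp phi (FBox M phi))) /\
  (forall (M : msg Agent Data) (phi : form Agent Data),
      valid CM phi -> valid CM (FBox M phi)) /\
  (forall (M M' : msg Agent Data) (phi : form Agent Data),
      valid CM (FImp (Fk CM M) (Fk CM M')) ->
      valid CM (FImp (FBox M' phi) (FBox M phi))).
Proof.
split; [move=> a K s /=; apply/Val_k; exact: cl_self|].
split.
  move=> a M M' K s /=; split.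
  - move=> t _ [H1 H2]; apply/Val_k; apply: cl_pair; exact/Val_k.
  - move=> t _ H; move/Val_k: H => H; split; apply/Val_k.
    + exact: cl_fst H.
    + exact: cl_snd H.
split; [move=> M K s t H /=; apply/Val_k; exact: R_i H|].
split.
  move=> M phi psi K s /= t Hst H1 t' Htt' H2 u Hu.
  apply: (H1 u (R_v (RCM_le Htt') Hu)); first exact: le_refl.
  exact: H2.
split.
  move=> M phi K s /= t Hst H1 t' Htt' H2.
  apply: H1; apply: R_v (RCM_le Htt') _; apply: R_ii; exact/Val_k.
split.
  move=> M phi K s /= t Hst H1 t' Htt' H2.
  have [u Hu] := R_iii M t'.
  apply: (H2 u); first by apply/R_CM; apply: R_iv Hu.
  split; first by apply/Val_k; exact: R_i Hu.
  apply: H1; exact: R_v (RCM_le Htt') Hu.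
split.
  move=> M phi K s /= t Hst H u Hu.
  apply: persist H; apply/R_CM; exact: R_iv Hu.
split; first by move=> M phi H K s /= t _; apply: H.
move=> M M' phi H K s /= t Hst H1 u Hu.
apply: H1; apply: (R_vi _ Hu) => s' Hs'.
apply/Val_k; apply: (H K s' s' (le_refl _)); exact/Val_k.
Qed.
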